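(* The VC-dimension of the edge relation on the Hamming graph $H(d,q)$ equals $3$ if and only if at least one of the following holds: (1) $d\ge 3$ and $q\ge 3$; (2) $d\ge 2$ and $q\ge 4$; (3) $d\ge 4$ and $q\ge 2$.
   Context: For $d,q\in\mathbb N$ and a set $S$ with $|S|=q$, the Hamming graph $H(d,q)$ has vertex set $S^d$, two vertices adjacent iff they agree in all but exactly one coordinate. The VC-dimension of the edge relation on a graph $G$ is the largest size of a set $A\subseteq V(G)$ such that $\{A\cap N(v)\mid v\in V(G)\}$ equals the power set of $A$, where $N(v)$ is the set of vertices adjacent to $v$. *)

(* Defs.v *)
From mathcomp Require Import all_boot.
Set Implicit Arguments. Unset Strict Implicit. Unset Printing Implicit Defensive.

Definition hamming_vertex (d q : nat) := {ffun 'I_d -> 'I_q}.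

Definition hamming_adj (d q : nat) (x y : hamming_vertex d q) : bool :=
  #|[set i | x i != y i]| == 1.

Definition nbhd (T : finType) (e : rel T) (v : T) : {set T} := [set u | e v u].

Definition shattered (T : finType) (e : rel T) (A : {set T}) : bool :=
  [set A :&: nbhd e v | v : T] == powerset A.

(* VC-dimension of the edge relation: largest size of a shattered set
   (0 if no set is shattered, which only happens on the empty graph). *)
Definition vc_dim (T : finType) (e : rel T) : nat :=
  \max_(A : {set T} | shattered e A) #|A|.

Definition hamming_vc_dim (d q : nat) : nat :=
  vc_dim (@hamming_adj d q).

(* Main.v *)
Require Import Defs.
From mathcomp Require Import all_boot.
From mathcomp Require Import zify.
Set Warnings "-notation-overridden".
Set Implicit Arguments. Unset Strict Implicit.

Lemma two_ord n (x y : 'I_n) : x != y -> 1 < n.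
Proof. case: x y => [x Hx] [y Hy]; rewrite -!val_eqE /=. lia. Qed.
Lemma three_ord n (x y z : 'I_n) : x != y -> x != z -> y != z -> 2 < n.
Proof. case: x y z => [x Hx] [y Hy] [z Hz]; rewrite -!val_eqE /=. lia. Qed.
Lemma four_ord n (x y z u : 'I_n) : x != y -> x != z -> x != u -> y != z -> y != u -> z != u -> 3 < n.
Proof. case: x y z u => [x Hx] [y Hy] [z Hz] [u Hu]; rewrite -!val_eqE /=. lia. Qed.

Lemma pick_el (T : finType) (A : {set T}) n : n < #|A| -> exists2 a, a \in A & n <= #|A :\ a|.
Proof.
move=> H. have : A != set0 by rewrite -card_gt0; apply: leq_ltn_trans H.
case/set0Pn => a aA; exists a => //.
by move: H; rewrite (cardsD1 a) aA add1n ltnS.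
Qed.

Lemma card_count d (P : pred nat) : #|[set i : 'I_d | P i]| = count P (iota 0 d).
Proof. rewrite -val_enum_ord count_map cardsE cardE /enum_mem size_filter.
by rewrite filter_predT. Qed.

Section Generic.
Variable T : finType.
Variable e : rel T.

Lemma shattered_wit (A : {set T}) : shattered e A ->
  forall P : pred T, exists w, forall x, x \in A -> e w x = P x.
Proof.
move=> /eqP HA P.
have : [set x in A | P x] \in powerset A.
  by rewrite powersetE; apply/subsetP => x; rewrite inE => /andP [].
rewrite -HA => /imsetP [w _ Hw]; exists w => x xA.
by move: Hw => /setP /(_ x); rewrite /nbhd !inE xA /= => ->.
Qed.

Lemma lb3 (a b c : T) : a != b -> a != c -> b != c ->
  (forall ba bb bc : bool, exists w, [/\ e w a = ba, e w b = bb & e w c = bc]) ->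
  shattered e [set a; b; c] /\ #|[set a; b; c]| = 3.
Proof.
move=> ab ac bc W; split; last first.
  by rewrite -setUA cardsU1 cards2 !inE negb_or ab ac bc.
rewrite /shattered; apply/eqP/setP => S; apply/idP/idP.
  by case/imsetP => w _ ->; rewrite powersetE; apply: subsetIl.
rewrite powersetE => SA.
have [w [Ha Hb Hc]] := W (a \in S) (b \in S) (c \in S).
apply/imsetP; exists w => //; apply/setP => x; rewrite /nbhd !inE.
case: (eqVneq x a) => [->|xa]; first by rewrite Ha.
case: (eqVneq x b) => [->|xb]; first by rewrite Hb.
case: (eqVneq x c) => [->|xc]; first by rewrite Hc.
rewrite /=; apply/negbTE/negP => /(subsetP SA); rewrite !inE.
by rewrite (negbTE xa) (negbTE xb) (negbTE xc).
Qed.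

End Generic.

Section Upper.
Variables d q : nat.
Local Notation V := (hamming_vertex d q).
Local Notation adj := (@hamming_adj d q).

Lemma adjP (x y : V) :
  reflect (exists i, x i != y i /\ forall k, k != i -> x k = y k) (adj x y).
Proof.
rewrite /hamming_adj; apply: (iffP cards1P) => [[i Hi]|[i [Hi Hk]]].
- exists i; split.
    have : i \in [set i0 | x i0 != y i0] by rewrite Hi set11.
    by rewrite inE.
  move=> k Hk; apply/eqP; apply: contraNT Hk => Hne.
  have : k \in [set i0 | x i0 != y i0] by rewrite inE.
  by rewrite Hi inE.
- exists i; apply/setP => k; rewrite !inE.
  by case: (eqVneq k i) => [->|/Hk ->]; rewrite ?Hi ?eqxx.
Qed.

Lemma adj_irr (x : V) : ~~ adj x x.
Proof. by apply/adjP => -[i []]; rewrite eqxx. Qed.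

Definition on (v a : V) i := a i != v i /\ forall k, k != i -> a k = v k.

Lemma adj_on (v a : V) : adj v a -> exists i, on v a i.
Proof.
move/adjP => [i [H1 H2]]; exists i; split; first by rewrite eq_sym.
by move=> k /H2 ->.
Qed.

Lemma adj_intro (x y : V) i : x i != y i -> (forall k, k != i -> x k = y k) -> adj x y.
Proof. by move=> *; apply/adjP; exists i. Qed.

Lemma ext (x y : V) i : x i = y i -> (forall k, k != i -> x k = y k) -> x = y.
Proof. move=> H1 H2; apply/ffunP => k; case: (eqVneq k i) => [->//|/H2//]. Qed.

Lemma line (a c w : V) i : a != c -> (forall k, k != i -> a k = c k) ->
  adj w a -> adj w c -> forall k, k != i -> w k = a k.
Proof.
move=> ac Hac /adjP [m [Hm Hm']] /adjP [m' [Hn Hn']] k ki.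
apply/eqP; apply: contraT => Hk.
have km : k == m by apply: contraNT Hk => /Hm' /eqP.
have Hk2 : w k != c k by rewrite -Hac.
have km' : k == m' by apply: contraNT Hk2 => /Hn' /eqP.
have im : i != m by rewrite -(eqP km) eq_sym.
have im' : i != m' by rewrite -(eqP km') eq_sym.
suff E : a = c by rewrite E eqxx in ac.
apply: (ext (i := i) _ Hac).
by rewrite -(Hm' _ im) (Hn' _ im').
Qed.

Lemma two_lines (v a b w : V) ia ib : ia != ib -> on v a ia -> on v b ib ->
  adj w a -> adj w b -> w != v ->
  [/\ w ia = a ia, w ib = b ib & forall k, k != ia -> k != ib -> w k = v k].
Proof.
move=> iab [Ha1 Ha2] [Hb1 Hb2] /adjP [k [Hk Hk']] /adjP [l [Hl Hl']] wv.
have bia : b ia = v ia by apply: Hb2.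
have aib : a ib = v ib by apply: Ha2; rewrite eq_sym.
case: (eqVneq k ia) => [kia|kia].
  subst k.
  have wib0 : w ib = a ib by apply: Hk'; rewrite eq_sym.
  have wib : w ib != b ib by rewrite wib0 aib eq_sym.
  have lib : l == ib by apply: contraNT wib; rewrite eq_sym => /Hl' /eqP.
  have ial : ia != l by rewrite (eqP lib).
  suff E : w = v by rewrite E eqxx in wv.
  apply: (ext (i := ia)).
    by rewrite Hl' // bia.
  by move=> x xi; rewrite Hk' // Ha2.
have wia : w ia = a ia by apply: Hk'; rewrite eq_sym.
have wib : w ia != b ia by rewrite wia bia.
have lia : l == ia by apply: contraNT wib; rewrite eq_sym => /Hl' /eqP.
have wib2 : w ib = b ib by apply: Hl'; rewrite (eqP lia) eq_sym.
have kib : k == ib.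
  apply: contraT => kib; move: Hb1; rewrite -wib2 Hk'; last by rewrite eq_sym.
  by rewrite aib eqxx.
split => // x xa xb; rewrite Hk' ?(eqP kib) //; exact: Ha2.
Qed.

Lemma three (v w a b c : V) ia ib ic : w != v -> a != c -> b != c ->
  on v a ia -> on v b ib -> on v c ic -> adj w a -> adj w b -> adj w c -> ia = ib.
Proof.
move=> wv ac bc Ha Hb Hc wa wb wc; apply/eqP; apply: contraT => iab.
have [w1 w2 w3] := two_lines iab Ha Hb wa wb wv.
case: Ha Hb Hc => [Ha1 Ha2] [Hb1 Hb2] [Hc1 Hc2].
move/adjP: wc => [m [Hm Hm']].
case: (eqVneq ic ia) => [cia|cia].
  subst ic.
  have cib : c ib = v ib by apply: Hc2; rewrite eq_sym.
  have wc : w ib != c ib by rewrite w2 cib.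
  have mib : m == ib by apply: contraNT wc; rewrite eq_sym => /Hm' /eqP.
  suff E : c = a by rewrite E eqxx in ac.
  apply: (ext (i := ia)).
    by rewrite -w1 Hm' // (eqP mib).
  by move=> k ki; rewrite Ha2 // Hc2.
case: (eqVneq ic ib) => [cib|cib].
  subst ic.
  have cia2 : c ia = v ia by apply: Hc2.
  have wc : w ia != c ia by rewrite w1 cia2.
  have mia : m == ia by apply: contraNT wc; rewrite eq_sym => /Hm' /eqP.
  suff E : c = b by rewrite E eqxx in bc.
  apply: (ext (i := ib)).
    by rewrite -w2 Hm' // (eqP mia) eq_sym.
  by move=> k ki; rewrite Hb2 // Hc2.
have cia2 : c ia = v ia by apply: Hc2; rewrite eq_sym.
have cib2 : c ib = v ib by apply: Hc2; rewrite eq_sym.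
have wca : w ia != c ia by rewrite w1 cia2.
have wcb : w ib != c ib by rewrite w2 cib2.
have mia : m == ia by apply: contraNT wca; rewrite eq_sym => /Hm' /eqP.
have mib : m == ib by apply: contraNT wcb; rewrite eq_sym => /Hm' /eqP.
by move: iab; rewrite -(eqP mia) -(eqP mib) eqxx.
Qed.

Lemma four (v w a b c e : V) j : on v a j -> on v b j -> on v c j -> on v e j ->
  a != b -> c != e -> adj w a -> adj w b -> ~~ adj w c -> ~~ adj w e -> False.
Proof.
move=> [Ha1 Ha2] [Hb1 Hb2] [Hc1 Hc2] [He1 He2] ab ce wa wb wc we.
have Hab : forall k, k != j -> a k = b k by move=> k kj; rewrite Ha2 // Hb2.
have Hw := line ab Hab wa wb.
have wcj : w j = c j.
  apply/eqP; apply: contraNT wc => H; apply: (adj_intro H) => k kj.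
  by rewrite Hw // Ha2 // Hc2.
have wej : w j = e j.
  apply/eqP; apply: contraNT we => H; apply: (adj_intro H) => k kj.
  by rewrite Hw // Ha2 // He2.
suff E : c = e by rewrite E eqxx in ce.
apply: (ext (i := j)); first by rewrite -wcj.
by move=> k kj; rewrite Hc2 // He2.
Qed.

Lemma no4 (A : {set V}) : shattered adj A -> #|A| <= 3.
Proof.
move=> sh; rewrite leqNgt; apply/negP => H.
have [a aA H1] := pick_el H.
have [b bA H2] := pick_el H1.
have [c cA H3] := pick_el H2.
have [e eA _] := pick_el H3.
move: bA cA eA; rewrite !inE => /andP [ba bA] /and3P [cb ca cA] /and4P [ec eb ea eA].
have ab : a != b by rewrite eq_sym.
have ac : a != c by rewrite eq_sym.
have ae : a != e by rewrite eq_sym.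
have bc : b != c by rewrite eq_sym.
have be : b != e by rewrite eq_sym.
have ce : c != e by rewrite eq_sym.
have W := shattered_wit sh.
have [v Hv] := W predT.
have [ia Ha] := adj_on (Hv a aA).
have [ib Hb] := adj_on (Hv b bA).
have [ic Hc] := adj_on (Hv c cA).
have [ie He] := adj_on (Hv e eA).
have [w1 Hw1] := W (fun x => x != e).
have w1v : w1 != v.
  apply/eqP => E; have := Hv e eA; rewrite -E Hw1 // eqxx; done.
have w1a : adj w1 a by rewrite Hw1.
have w1b : adj w1 b by rewrite Hw1.
have w1c : adj w1 c by rewrite Hw1.
have iab := three w1v ac bc Ha Hb Hc w1a w1b w1c.
have iac := three w1v ab cb Ha Hc Hb w1a w1c w1b.
have [w2 Hw2] := W (fun x => x != c).
have w2v : w2 != v.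
  apply/eqP => E; have := Hv c cA; rewrite -E Hw2 // eqxx; done.
have w2a : adj w2 a by rewrite Hw2.
have w2b : adj w2 b by rewrite Hw2.
have w2e : adj w2 e by rewrite Hw2.
have iae := three w2v ab eb Ha He Hb w2a w2e w2b.
have [w3 Hw3] := W (fun x => (x == a) || (x == b)).
have w3a : adj w3 a by rewrite Hw3 // eqxx.
have w3b : adj w3 b by rewrite Hw3 // eqxx orbT.
have w3c : ~~ adj w3 c by rewrite Hw3 // negb_or ca cb.
have w3e : ~~ adj w3 e by rewrite Hw3 // negb_or ea eb.
rewrite -iab in Hb; rewrite -iac in Hc; rewrite -iae in He.
exact: (four Ha Hb Hc He ab ce w3a w3b w3c w3e).
Qed.

Lemma conv (a b c : V) : a != b -> a != c -> b != c ->
  (forall P : pred V, exists w, [/\ adj w a = P a, adj w b = P b & adj w c = P c]) ->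
  [\/ (3 <= d /\ 3 <= q), (2 <= d /\ 4 <= q) | (4 <= d /\ 2 <= q)].
Proof.
move=> ab ac bc W.
have [v [va vb vc]] := W predT.
have [ia Ha] := adj_on va.
have [ib Hb] := adj_on vb.
have [ic Hc] := adj_on vc.
have pairq : forall (a c w : V) i, on v a i -> on v c i -> a != c ->
    adj w a -> adj w c -> w != v -> 3 < q.
  move=> a' c' w i [Ha1 Ha2] [Hc1 Hc2] ac' wa wc wv.
  have Hac : forall k, k != i -> a' k = c' k by move=> k ki; rewrite Ha2 // Hc2.
  have Hw := line ac' Hac wa wc.
  have e1 : a' i != c' i.
    apply/eqP => E; suff E2 : a' = c' by rewrite E2 eqxx in ac'.
    exact: (ext (i := i)).
  have e2 : w i != v i.
    apply/eqP => E; suff E2 : w = v by rewrite E2 eqxx in wv.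
    by apply: (ext (i := i)) => // k ki; rewrite Hw // Ha2.
  have e3 : w i != a' i.
    apply/eqP => E; suff E2 : w = a' by rewrite E2 (negbTE (adj_irr _)) in wa.
    exact: (ext (i := i)).
  have e4 : w i != c' i.
    apply/eqP => E; suff E2 : w = c' by rewrite E2 (negbTE (adj_irr _)) in wc.
    by apply: (ext (i := i)) => // k ki; rewrite Hw // Hac.
  apply: (@four_ord _ (v i) (a' i) (c' i) (w i)); try done; by rewrite eq_sym.
have sidecase : forall (a b w : V) ia ib, ia != ib -> on v a ia -> on v b ib ->
    w ib != a ib -> (forall x, x != ib -> w x = a x) -> ~~ adj w b -> 2 < q.
  move=> a' b' w ja jb jab [Ha1 Ha2] [Hb1 Hb2] w1 w2 wb.
  have aib : a' jb = v jb by apply: Ha2; rewrite eq_sym.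
  have bia : b' ja = v ja by apply: Hb2.
  have e1 : w jb != b' jb.
    apply: contraNT wb => /negPn /eqP E; apply: (adj_intro (i := ja)).
      by rewrite w2 // bia.
    move=> x xa; case: (eqVneq x jb) => [->//|xb].
    by rewrite w2 // Ha2 // Hb2.
  apply: (@three_ord _ (v jb) (b' jb) (w jb)); first by rewrite eq_sym.
    by rewrite eq_sym -aib.
  by rewrite eq_sym.
case: (eqVneq ia ib) => [iab|iab].
  rewrite -iab in Hb.
  case: (eqVneq ia ic) => [iac|iac].
    rewrite -iac in Hc; apply: Or32.
    case: Ha Hb Hc => [Ha1 Ha2] [Hb1 Hb2] [Hc1 Hc2].
    have dst : forall (x y : V), x != y -> (forall k, k != ia -> x k = v k) ->
        (forall k, k != ia -> y k = v k) -> x ia != y ia.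
      move=> x y xy Hx Hy; apply/eqP => E; suff E2 : x = y by rewrite E2 eqxx in xy.
      by apply: (ext (i := ia)) => // k ki; rewrite Hx // Hy.
    split; last first.
      apply: (@four_ord _ (v ia) (a ia) (b ia) (c ia)); first [by rewrite eq_sym | by apply: dst].
    case: (ltnP 1 d) => // d1.
    have kj : forall k : 'I_d, k = ia.
      move=> k; apply: ord_inj; move: (ltn_ord k) (ltn_ord ia); lia.
    have [w [wa wb _]] := W (fun _ => false).
    have E1 : w ia = a ia.
      apply/eqP; apply: contraT => H; have := adj_intro H.
      by rewrite wa; apply => k; rewrite (kj k) eqxx.
    have E2 : w ia = b ia.
      apply/eqP; apply: contraT => H; have := adj_intro H.
      by rewrite wb; apply => k; rewrite (kj k) eqxx.
    by move: (dst a b ab Ha2 Hb2); rewrite -E1 -E2 eqxx.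
  have [w [wa wb wc]] := W (fun x => x != c).
  have wv : w != v by apply/eqP => E; move: wc; rewrite E vc /= eqxx.
  apply: Or32; split; first exact: (two_ord iac).
  by apply: (pairq a b w ia) => //; rewrite ?wa ?wb.
case: (eqVneq ia ic) => [iac|iac].
  rewrite -iac in Hc.
  have [w [wa wb wc]] := W (fun x => x != b).
  have wv : w != v by apply/eqP => E; move: wb; rewrite E vb /= eqxx.
  apply: Or32; split; first exact: (two_ord iab).
  by apply: (pairq a c w ia) => //; rewrite ?wa ?wc // eq_sym.
case: (eqVneq ib ic) => [ibc|ibc].
  rewrite -ibc in Hc.
  have [w [wa wb wc]] := W (fun x => x != a).
  have wv : w != v by apply/eqP => E; move: wa; rewrite E va /= eqxx.
  apply: Or32; split; first exact: (two_ord iab).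
  by apply: (pairq b c w ib) => //; rewrite ?wb ?wc // eq_sym.
have d3 : 2 < d by apply: (three_ord iab iac ibc).
have [w [wa wb wc]] := W (fun x => x == a).
move: wa; rewrite /= eqxx => /adjP [k [Hk Hk']].
have wb' : ~~ adj w b by rewrite wb eq_sym.
have wc' : ~~ adj w c by rewrite wc eq_sym.
case: (eqVneq k ia) => [kia|kia].
  subst k; apply: Or31; split => //.
  case: Ha Hb => [Ha1 Ha2] [Hb1 Hb2].
  have e2 : w ia != v ia.
    apply/eqP => E; suff E2 : w = v by move: wb'; rewrite E2 vb.
    by apply: (ext (i := ia)) => // k ki; rewrite Hk' // Ha2.
  by apply: (@three_ord _ (v ia) (a ia) (w ia)); rewrite 1?eq_sym.
case: (eqVneq k ib) => [kib|kib].
  subst k; apply: Or31; split => //.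
  exact: (sidecase a b w ia ib iab Ha Hb Hk Hk' wb').
case: (eqVneq k ic) => [kic|kic].
  subst k; apply: Or31; split => //.
  exact: (sidecase a c w ia ic iac Ha Hc Hk Hk' wc').
apply: Or33; split.
  by apply: (@four_ord _ ia ib ic k); first [done | rewrite eq_sym].
by case: Ha => [Ha1 _]; apply: (two_ord Ha1).
Qed.

End Upper.

Section Lower.
Variables d n k m : nat.
Hypothesis kn : k <= n.
Hypothesis md : m <= d.

Definition vtx (s : seq nat) : hamming_vertex d n.+1 :=
  [ffun i : 'I_d => inord (nth 0 s i)].

Lemma nth_le (s : seq nat) i : all (fun x => x <= k) s -> nth 0 s i <= n.
Proof.
move=> Hs; apply: leq_trans kn.
case: (ltnP i (size s)) => H; last by rewrite nth_default.
by apply: (allP Hs); rewrite mem_nth.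
Qed.

Lemma diff_card (s t : seq nat) : all (fun x => x <= k) s -> all (fun x => x <= k) t ->
  size s <= m -> size t <= m ->
  #|[set i | vtx s i != vtx t i]| = count (fun i => nth 0 s i != nth 0 t i) (iota 0 m).
Proof.
move=> Hs Ht ss st.
have -> : [set i | vtx s i != vtx t i] = [set i : 'I_d | (fun i => nth 0 s i != nth 0 t i) i].
  apply/setP => i; rewrite !inE !ffunE -val_eqE /= !inordK //; by rewrite ltnS nth_le.
rewrite (card_count d (fun i => nth 0 s i != nth 0 t i)) -(subnKC md) iotaD count_cat add0n.
have -> : count (fun i => nth 0 s i != nth 0 t i) (iota m (d - m)) = 0.
  apply/eqP; rewrite -leqn0 leqNgt -has_count; apply/hasPn => x.
  rewrite mem_iota => /andP [mx _].
  by rewrite !nth_default ?(leq_trans _ mx).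
by rewrite addn0.
Qed.

Lemma adj_vtx (s t : seq nat) : all (fun x => x <= k) s -> all (fun x => x <= k) t ->
  size s <= m -> size t <= m ->
  hamming_adj (vtx s) (vtx t) = (count (fun i => nth 0 s i != nth 0 t i) (iota 0 m) == 1).
Proof. by move=> *; rewrite /hamming_adj diff_card. Qed.

Lemma neq_vtx (s t : seq nat) : all (fun x => x <= k) s -> all (fun x => x <= k) t ->
  size s <= m -> size t <= m ->
  count (fun i => nth 0 s i != nth 0 t i) (iota 0 m) != 0 -> vtx s != vtx t.
Proof.
move=> Hs Ht ss st; apply: contraNneq => E.
rewrite -(diff_card Hs Ht ss st) E.
have -> : [set i | vtx t i != vtx t i] = set0 by apply/setP => i; rewrite !inE eqxx.
by rewrite cards0.
Qed.

End Lower.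


Lemma lbA d n : 2 <= d -> 3 <= n ->
  exists A, shattered (@hamming_adj d n.+1) A /\ #|A| = 3.
Proof.
move=> md kn.
have Av := adj_vtx kn md. have Nv := neq_vtx kn md.
eexists; apply: (lb3 (a := vtx d n [:: 1; 0]) (b := vtx d n [:: 2; 0]) (c := vtx d n [:: 3; 0])).
- by apply: Nv.
- by apply: Nv.
- by apply: Nv.
case; case; case.
- by exists (vtx d n [:: 0; 0]); rewrite !Av.
- by exists (vtx d n [:: 3; 0]); rewrite !Av.
- by exists (vtx d n [:: 2; 0]); rewrite !Av.
- by exists (vtx d n [:: 1; 1]); rewrite !Av.
- by exists (vtx d n [:: 1; 0]); rewrite !Av.
- by exists (vtx d n [:: 2; 1]); rewrite !Av.
- by exists (vtx d n [:: 3; 1]); rewrite !Av.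
- by exists (vtx d n [:: 0; 1]); rewrite !Av.
Qed.

Lemma lbB d n : 3 <= d -> 2 <= n ->
  exists A, shattered (@hamming_adj d n.+1) A /\ #|A| = 3.
Proof.
move=> md kn.
have Av := adj_vtx kn md. have Nv := neq_vtx kn md.
eexists; apply: (lb3 (a := vtx d n [:: 1; 0; 0]) (b := vtx d n [:: 0; 1; 0]) (c := vtx d n [:: 0; 0; 1])).
- by apply: Nv.
- by apply: Nv.
- by apply: Nv.
case; case; case.
- by exists (vtx d n [:: 0; 0; 0]); rewrite !Av.
- by exists (vtx d n [:: 1; 1; 0]); rewrite !Av.
- by exists (vtx d n [:: 1; 0; 1]); rewrite !Av.
- by exists (vtx d n [:: 2; 0; 0]); rewrite !Av.
- by exists (vtx d n [:: 0; 1; 1]); rewrite !Av.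
- by exists (vtx d n [:: 0; 2; 0]); rewrite !Av.
- by exists (vtx d n [:: 0; 0; 2]); rewrite !Av.
- by exists (vtx d n [:: 1; 1; 1]); rewrite !Av.
Qed.

Lemma lbC d n : 4 <= d -> 1 <= n ->
  exists A, shattered (@hamming_adj d n.+1) A /\ #|A| = 3.
Proof.
move=> md kn.
have Av := adj_vtx kn md. have Nv := neq_vtx kn md.
eexists; apply: (lb3 (a := vtx d n [:: 1; 0; 0; 1]) (b := vtx d n [:: 0; 1; 0; 1]) (c := vtx d n [:: 0; 0; 1; 1])).
- by apply: Nv.
- by apply: Nv.
- by apply: Nv.
case; case; case.
- by exists (vtx d n [:: 0; 0; 0; 1]); rewrite !Av.
- by exists (vtx d n [:: 1; 1; 0; 1]); rewrite !Av.
- by exists (vtx d n [:: 1; 0; 1; 1]); rewrite !Av.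
- by exists (vtx d n [:: 1; 0; 0; 0]); rewrite !Av.
- by exists (vtx d n [:: 0; 1; 1; 1]); rewrite !Av.
- by exists (vtx d n [:: 0; 1; 0; 0]); rewrite !Av.
- by exists (vtx d n [:: 0; 0; 1; 0]); rewrite !Av.
- by exists (vtx d n [:: 1; 1; 1; 1]); rewrite !Av.
Qed.

Theorem mainTheorem17 (d q : nat) :
  hamming_vc_dim d q = 3 <->
  [\/ (3 <= d /\ 3 <= q), (2 <= d /\ 4 <= q) | (4 <= d /\ 2 <= q)].
Proof.
have ub := @no4 d q.
have vc_of : (exists A, shattered (@hamming_adj d q) A /\ #|A| = 3) -> hamming_vc_dim d q = 3.
  move=> [A [sA cA]]; apply/eqP; rewrite eqn_leq; apply/andP; split.
    by apply/bigmax_leqP => B; exact: ub.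
  rewrite /hamming_vc_dim /vc_dim -{1}cA; exact: (leq_bigmax_cond A sA).
split.
  move=> H.
  case: (boolP [exists A, shattered (@hamming_adj d q) A && (#|A| == 3)]) =>
      [/existsP [A /andP [sA /eqP cA]] | /existsPn none].
    have H2 : 2 < #|A| by rewrite cA.
    have [a aA H1] := pick_el H2.
    have [b bA H0] := pick_el H1.
    have [c cA' _] := pick_el H0.
    move: bA cA'; rewrite !inE => /andP [ba bA] /and3P [cb ca cA'].
    apply: (@conv d q a b c); rewrite 1?eq_sym //.
    move=> P; have [w Hw] := shattered_wit sA P.
    by exists w; split; apply: Hw.
  exfalso.
  have : hamming_vc_dim d q <= 2.
    apply/bigmax_leqP => B sB.
    have := ub B sB; have := none B; rewrite sB /=. by move=> /negbTE n3; rewrite leq_eqVlt n3.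
  by rewrite H.
case => [[d3 q3]|[d2 q4]|[d4 q2]]; apply: vc_of.
- by case: q ub q3 => // n _ q3; apply: lbB.
- by case: q ub q4 => // n _ q4; apply: lbA.
- by case: q ub q2 => // n _ q2; apply: lbC.
Qed.
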